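(* Let $A:\mathbb{R}^n\to\mathbb{R}^{n\times n}$ be symmetric-matrix valued, three times continuously differentiable at every $v\neq 0$, with $A(\alpha v)=A(v)$ for all $\alpha\in\mathbb{R}\setminus\{0\}$. Let $J(v):=\frac{\partial}{\partial v}(A(v)v)$, fix $\sigma\in\mathbb{R}$, and define, for $v$ with $J(v)-\sigma I$ nonsingular, $\psi(v):=(J(v)-\sigma I)^{-1}v$ and $\varphi(v):=\psi(v)/\|\psi(v)\|_2$. (a) Suppose $(\lambda_*,v_* )\in\mathbb{R}\times\mathbb{R}^n$ satisfies $A(v_* )v_*=\lambda_*v_*$ with $\|v_*\|_2=1$, and suppose $\sigma\neq\lambda_*$ and $J(v_* )-\sigma I$ is nonsingular. Then $\varphi(v_* )=v_*$ if $\sigma<\lambda_*$, and $\varphi(v_* )=-v_*$ if $\sigma>\lambda_*$. (b) Suppose $v_*$ is such that $J(v_* )-\sigma I$ is nonsingular and $v_*=\varphi(v_* )$ or $v_*=-\varphi(v_* )$. Then $A(v_* )v_*=\lambda_*v_*$ with $$\lambda_*:=\sigma\pm\frac{1}{\|(J(v_* )-\sigma I)^{-1}v_*\|_2}=v_*^TA(v_* )v_*,$$ where the sign $\pm$ corresponds to the case $\varphi(v_* )=\pm v_*$.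
   Context: $\|\cdot\|_2$ is the Euclidean norm; $\frac{\partial}{\partial v}$ denotes the Jacobian matrix. *)

(* Defs.v *)
From HB Require Import structures.
From mathcomp Require Import all_boot all_order all_algebra.
From mathcomp Require Import all_classical all_reals all_analysis.
Set Implicit Arguments. Unset Strict Implicit. Unset Printing Implicit Defensive.
Import Order.TTheory GRing.Theory Num.Theory.
Import numFieldNormedType.Exports.
Local Open Scope ring_scope.

Fixpoint iterD (R : numFieldType) (V W : normedModType R) (f : V -> W)
    (ds : seq V) : V -> W :=
  match ds with
  | [::] => f
  | d :: ds' => fun x => derive (iterD f ds') x d
  end.

(* In finite dimension (and U open) this is
   the usual C^k condition (all partial derivatives up to order k exist
   and are continuous). *)
Definition Ck_on (R : numFieldType) (V W : normedModType R) (k : nat)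
    (f : V -> W) (U : V -> Prop) : Prop :=
  forall ds : seq V, (size ds <= k)%N ->
    (forall x, U x -> {for x, continuous (iterD f ds)}) /\
    ((size ds < k)%N -> forall x d, U x -> derivable (iterD f ds) x d).

Definition norm2 (R : realType) (n : nat) (v : 'cV[R]_n) : R :=
  Num.sqrt (\sum_(i < n) v i ord0 ^+ 2).

Definition ebasis (R : realType) (n : nat) (j : 'I_n) : 'cV[R]_n :=
  delta_mx j ord0.

Definition jacobianC (R : realType) (n : nat) (g : 'cV[R]_n -> 'cV[R]_n)
    (v : 'cV[R]_n) : 'M[R]_n :=
  \matrix_(i < n, j < n) (derive g v (@ebasis R n j)) i ord0.

Definition Jmat (R : realType) (n : nat) (A : 'cV[R]_n -> 'M[R]_n)
    (v : 'cV[R]_n) : 'M[R]_n :=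
  jacobianC (fun w => A w *m w) v.

Definition psi (R : realType) (n : nat) (A : 'cV[R]_n -> 'M[R]_n) (sigma : R)
    (v : 'cV[R]_n) : 'cV[R]_n :=
  invmx (Jmat A v - sigma%:M) *m v.

Definition phi (R : realType) (n : nat) (A : 'cV[R]_n -> 'M[R]_n) (sigma : R)
    (v : 'cV[R]_n) : 'cV[R]_n :=
  (norm2 (psi A sigma v))^-1 *: psi A sigma v.

(* Main.v *)
Require Import Defs.
From HB Require Import structures.
From mathcomp Require Import all_boot all_order all_algebra.
From mathcomp Require Import all_classical all_reals all_analysis.
From mathcomp Require Import ring lra.
Import Order.TTheory GRing.Theory Num.Theory.
Import numFieldNormedType.Exports.
Local Open Scope ring_scope.
Local Open Scope classical_set_scope.

Section Helpers.
Context {R : realType} {V : normedModType R}.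

Lemma is_derive_line (W : normedModType R) (f : V -> W) b w t :
  derivable f (t *: b + w) b ->
  is_derive t (1:R) (fun s => f (s *: b + w)) ('D_b f (t *: b + w)).
Proof.
have E : (fun h : R => h^-1 *: (((fun s => f (s *: b + w)) \o shift t) (h *: 1)
            - (fun s => f (s *: b + w)) t)) =
         (fun h : R => h^-1 *: ((f \o shift (t *: b + w)) (h *: b) - f (t *: b + w))).
  apply/funext => h /=; congr (_ *: (f _ - _)).
  by rewrite scaler1 scalerDl addrA.
move=> db; apply: DeriveDef.
  by rewrite /derivable E.
by rewrite /derive E.
Qed.

Lemma mvt0 (g dg : R -> R) (k : R) :
  (forall t, `|t| <= `|k| -> is_derive t (1:R) g (dg t)) ->
  exists c, `|c| <= `|k| /\ g k - g 0 = dg c * k.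
Proof.
move=> H.
have cont : forall a b, `|a| <= `|k| -> `|b| <= `|k| ->
   {within `[a, b], continuous g}.
  move=> a b ha hb; apply: derivable_within_continuous => t.
  rewrite in_itv /= => /andP[t1 t2].
  have /H [] // : `|t| <= `|k|.
  rewrite ler_norml; move: ha hb; rewrite !ler_norml => /andP[? ?] /andP[? ?].
  apply/andP; split; lra.
case: (leP 0 k) => k0.
- have h1 : forall x, x \in `]0, k[%R -> is_derive x (1:R) g (dg x).
    move=> t; rewrite in_itv /= => /andP[t1 t2]; apply: H.
    by rewrite !ger0_norm; lra.
  have h2 : {within `[0, k], continuous g}.
    by apply: cont; rewrite ?normr0 ?ger0_norm //.
  have [c cin E] := @MVT_segment R g dg 0 k k0 h1 h2.
  exists c; split; last by rewrite E subr0.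
  by move: cin; rewrite in_itv /= => /andP[c1 c2]; rewrite !ger0_norm //; lra.
- have h1 : forall x, x \in `]k, 0[%R -> is_derive x (1:R) g (dg x).
    move=> t; rewrite in_itv /= => /andP[t1 t2]; apply: H.
    by rewrite !ltr0_norm //; lra.
  have h2 : {within `[k, 0], continuous g}.
    by apply: cont; rewrite ?normr0 ?ltr0_norm //; lra.
  have [c cin E] := @MVT_segment R g dg k 0 (ltW k0) h1 h2.
  exists c; split.
    move: cin; rewrite in_itv /= => /andP[c1 c2]; rewrite (ltr0_norm k0).
    by rewrite ler_norml; apply/andP; split; lra.
  by apply/eqP; rewrite -opprB E sub0r mulrN opprK.
Qed.
Lemma derive_add_dir (f : V -> R) x a b c :
  (\forall y \near x, derivable f y b) ->
  {for x, continuous (fun y => 'D_b f y)} ->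
  derivable f x a ->
  'D_(a + c *: b) f x = 'D_a f x + c * 'D_b f x.
Proof.
move=> db cb da.
apply: cvg_lim; first exact: norm_hausdorff.
set q1 := fun h : R => h^-1 * (f ((h * c) *: b + (h *: a + x)) - f (h *: a + x)).
set q2 := fun h : R => h^-1 *: ((f \o shift x) (h *: a) - f x).
suff: (q1 + q2) @ 0^' --> c * 'D_b f x + 'D_a f x.
  move=> Q; rewrite [X in _ --> X]addrC.
  apply: (cvg_trans _ Q); apply: near_eq_cvg; near=> h.
  rewrite -[(q1 + q2) h]/(q1 h + q2 h) /q1 /q2 /=.
  have -> : h *: (a + c *: b) + x = (h * c) *: b + (h *: a + x).
    by rewrite scalerDr scalerA addrAC addrC.
  by rewrite -[h^-1 * _]/(h^-1 *: _) -scalerDr addrA subrK.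
apply: cvgD; last exact: da.
apply/cvgrPdist_le => e e0.
have e1 : 0 < e / (`|c| + 1) by rewrite divr_gt0 // ltr_pwDr.
have := cb; move/cvgrPdist_le => /(_ _ e1) hc.
have : \forall y \near x, derivable f y b /\ `|'D_b f x - 'D_b f y| <= e / (`|c|+1).
  by near=> y; split; near: y.
move=> /nbhs_normP [r /= r0 Hr].
have rp : 0 < r / (`|c| * `|b| + `|a| + 1).
  by rewrite divr_gt0 // ltr_pwDr // addr_ge0 // mulr_ge0.
near=> h.
have h0 : h != 0 by near: h; exact: nbhs_dnbhs_neq.
have hs : `|h| < r / (`|c| * `|b| + `|a| + 1) by near: h; apply: dnbhs0_lt.
set w := h *: a + x.
have HB : forall t, `|t| <= `|h * c| ->
    derivable f (t *: b + w) b /\ `|'D_b f x - 'D_b f (t *: b + w)| <= e / (`|c|+1).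
  move=> t ht; apply: Hr; rewrite /ball_ /= /w.
  rewrite addrA opprD addrCA subrr addr0 normrN.
  apply: le_lt_trans (ler_normD _ _) _; rewrite !normrZ.
  have : `|t| * `|b| <= `|h| * `|c| * `|b| by rewrite ler_wpM2r // -normrM.
  have : `|h| * (`|c| * `|b| + `|a| + 1) < r.
    by rewrite -ltr_pdivlMr // ltr_pwDr // addr_ge0 // mulr_ge0.
  have := normr_ge0 h; have := normr_ge0 a; have := normr_ge0 t.
  nra.
have dd : forall t, `|t| <= `|h * c| ->
    is_derive t (1:R) (fun s => f (s *: b + w)) ('D_b f (t *: b + w)).
  by move=> t ht; apply: is_derive_line; exact: (HB t ht).1.
have [t [ht E]] := mvt0 _ _ _ dd.
move: E; rewrite /= scale0r add0r => E.
rewrite /q1 -/w E.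
have -> : h^-1 * ('D_b f (t *: b + w) * (h * c)) = c * 'D_b f (t *: b + w).
  by field.
rewrite -mulrBr normrM.
apply: le_trans (ler_wpM2l (normr_ge0 c) (HB t ht).2) _.
rewrite mulrA ler_pdivrMr ?ltr_pwDr //.
have := normr_ge0 c; nra.
Unshelve. all: by end_near.
Qed.

Lemma derive_scale_dir (f : V -> R) x b c :
  (\forall y \near x, derivable f y b) ->
  {for x, continuous (fun y => 'D_b f y)} ->
  'D_(c *: b) f x = c * 'D_b f x.
Proof.
move=> db cb; rewrite -[c *: b]add0r derive_add_dir //; last exact: derivable0.
by rewrite derive0 add0r.
Qed.

Lemma derive_lincomb n (f : V -> R) x (e : 'I_n -> V) (cs : 'I_n -> R) :
  (forall d, \forall y \near x, derivable f y d) ->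
  (forall d, {for x, continuous (fun y => 'D_d f y)}) ->
  'D_(\sum_(j < n) cs j *: e j) f x = \sum_(j < n) cs j * 'D_(e j) f x.
Proof.
move=> db cb; elim: n e cs => [|n IH] e cs.
  by rewrite !big_ord0 derive0.
rewrite !big_ord_recr /= derive_add_dir //; first by rewrite IH.
exact: (nbhs_singleton (db _)).
Qed.

Lemma derive_eventually (W : normedModType R) (f : V -> W) x d L :
  (\forall h \near 0^', h^-1 *: (f (h *: d + x) - f x) = L) ->
  derivable f x d /\ 'D_d f x = L.
Proof.
move=> E.
have EE : {near 0^', (fun _ : R => L) =1
     (fun h : R => h^-1 *: ((f \o shift x) (h *: d) - f x))}.
  by apply: filterS E => h /= ->.
have C : (fun h : R => h^-1 *: ((f \o shift x) (h *: d) - f x)) @ 0^' --> L.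
  exact: cvg_trans (near_eq_cvg EE) (cvg_cst L).
split; first exact: (cvgP L C).
by apply: cvg_lim.
Qed.

End Helpers.
Arguments derive_eventually {R V W f x d L}.

Lemma Jv (R : realType) n (A : 'cV[R]_n -> 'M[R]_n) :
  Ck_on 3 A (fun v => v != 0) ->
  (forall (alpha : R) v, alpha != 0 -> A (alpha *: v) = A v) ->
  forall v, v != 0 -> Jmat A v *m v = A v *m v.
Proof.
move=> Ck hom v v0.
have Ck0 : forall x, x != 0 -> forall d, derivable A x d.
  by move=> x x0 d; exact: ((Ck [::] isT).2 isT x d x0).
have Ck1 : forall x d, x != 0 -> {for x, continuous (fun y => 'D_d A y)}.
  by move=> x d x0; exact: ((Ck [:: d] isT).1 x x0).
have nv : \forall y \near v, y != 0.
  apply/nbhs_normP; exists `|v|; first by rewrite /= normr_gt0.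
  move=> y /= vy; apply/eqP => y0; move: vy; rewrite y0 subr0 ltxx.
  done.
set a := fun i k (y : 'cV[R]_n) => A y i k.
have da : forall i k x d, x != 0 -> derivable (a i k) x d.
  move=> i k x d x0; exact: ((derivable_mxP _ _ _).1 (Ck0 x x0 d) i k).
have Dak : forall i k x d, x != 0 -> 'D_d (a i k) x = ('D_d A x) i k.
  by move=> i k x d x0; rewrite (derive_mx (Ck0 x x0 d)) mxE.
have ca : forall i k d, {for v, continuous (fun y => 'D_d (a i k) y)}.
  move=> i k d.
  have C : (fun y => ('D_d A y) i k) @ v --> ('D_d A v) i k.
    have := @continuous_comp _ _ _ _ (fun M : 'M[R]_n => M i k) v (Ck1 v d v0) (@coord_continuous _ n n i k _).
    by [].
  rewrite /prop_for /continuous_at Dak //.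
  have E : {near v, (fun y => ('D_d A y) i k) =1 (fun y => 'D_d (a i k) y)}.
    by near=> y; rewrite Dak //; near: y; exact: nv.
  exact: cvg_trans (near_eq_cvg E) C.
have hom0 : forall i k, 'D_v (a i k) v = 0.
  move=> i k.
  suff H : \forall h \near 0^', h^-1 *: (a i k (h *: v + v) - a i k v) = 0.
    exact: (derive_eventually H).2.
  near=> h.
  have h1 : h + 1 != 0.
    have hlt : `|h| < 1 by near: h; apply: dnbhs0_lt.
    apply/eqP => H; have hm : h = -1.
      by apply/eqP; rewrite -subr_eq0 opprK H.
    by move: hlt; rewrite hm normrN normr1 ltxx.
  by rewrite /a -[X in h *: v + X]scale1r -scalerDl hom // subrr scaler0.
set g := fun w : 'cV[R]_n => A w *m w.
have gE : forall i, (fun w => g w i ord0) =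
    \sum_(k < n) (a i k * (fun w : 'cV[R]_n => w k ord0)).
  move=> i; apply/funext => w; rewrite fct_sumE /g mxE; apply: eq_bigr => k _.
  by [].
have dc : forall k x d, derivable (fun w : 'cV[R]_n => w k ord0) x d /\
    'D_d (fun w : 'cV[R]_n => w k ord0) x = d k ord0.
  move=> k x d.
  suff H : \forall h \near 0^', h^-1 *: ((h *: d + x) k ord0 - x k ord0) = d k ord0.
    exact: (derive_eventually H).
  near=> h.
  have h0 : h != 0 by near: h; exact: nbhs_dnbhs_neq.
  rewrite !mxE addrK /GRing.scale /= mulrA mulVf ?mul1r //.
have dg : forall d, derivable g v d.
  move=> d; apply/derivable_mxP => i j; rewrite (ord1 j) gE.
  apply: derivable_sum => k; apply: derivableM; [exact: da | exact: (dc k v d).1].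
have Dg : forall d i, ('D_d g v) i ord0 =
    \sum_(k < n) (A v i k * d k ord0 + v k ord0 * 'D_d (a i k) v).
  move=> d i; rewrite (derive_mx (dg d)) mxE gE derive_sum; last first.
    move=> k; apply: derivableM; [exact: da | exact: (dc k v d).1].
  apply: eq_bigr => k _; rewrite deriveM ?(dc k v d).2 //; [exact: da|exact: (dc k v d).1].
have sv : \sum_(j < n) v j ord0 *: @ebasis R n j = v.
  rewrite [RHS]matrix_sum_delta; apply: eq_bigr => j _; by rewrite big_ord1.
apply/matrixP => i j; rewrite (ord1 j) !mxE.
under eq_bigr => j' _ do rewrite /Jmat /jacobianC mxE -/g Dg.
under eq_bigr do rewrite mulr_suml.
rewrite exchange_big /=; apply: eq_bigr => k _.
transitivity (A v i k * (\sum_(j < n) v j ord0 * @ebasis R n j k ord0) +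
   v k ord0 * (\sum_(j < n) v j ord0 * 'D_(@ebasis R n j) (a i k) v)).
  rewrite !mulr_sumr -big_split /=; apply: eq_bigr => jj _; ring.
rewrite -derive_lincomb; first last.
- by move=> d; exact: ca.
- by move=> d; near=> y; apply: da; near: y; exact: nv.
rewrite sv hom0 mulr0 addr0.
congr (_ * _).
have := congr1 (fun M : 'cV[R]_n => M k ord0) sv; rewrite /= summxE => <-.
apply: eq_bigr => jj _. rewrite [in RHS]mxE. reflexivity.
Unshelve. all: by end_near.
Qed.

Section Norm2.
Context {R : realType} {n : nat}.

Lemma norm2Z (c : R) (v : 'cV[R]_n) : norm2 (c *: v) = `|c| * norm2 v.
Proof.
rewrite /norm2; under eq_bigr do rewrite mxE exprMn.
by rewrite -mulr_sumr sqrtrM ?sqr_ge0 // sqrtr_sqr.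
Qed.

Lemma norm2_ge0 (v : 'cV[R]_n) : 0 <= norm2 v.
Proof. exact: sqrtr_ge0. Qed.

Lemma sum_sq_ge0 (v : 'cV[R]_n) : 0 <= \sum_(i < n) v i ord0 ^+ 2.
Proof. by apply: sumr_ge0 => i _; exact: sqr_ge0. Qed.

Lemma norm2_eq0 (v : 'cV[R]_n) : norm2 v = 0 -> v = 0.
Proof.
move/eqP; rewrite /norm2 sqrtr_eq0 => hs.
have s0 : \sum_(i < n) v i ord0 ^+ 2 = 0.
  by apply/eqP; rewrite eq_le hs sum_sq_ge0.
apply/matrixP => i j; rewrite (ord1 j) mxE.
have /psumr_eq0P H := s0.
by apply/eqP; rewrite -sqrf_eq0 H // => k _; exact: sqr_ge0.
Qed.

Lemma norm2_sq (v : 'cV[R]_n) : norm2 v ^+ 2 = \sum_(i < n) v i ord0 ^+ 2.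
Proof. by rewrite /norm2 sqr_sqrtr // sum_sq_ge0. Qed.

Lemma vTv (v : 'cV[R]_n) : (v^T *m v) ord0 ord0 = \sum_(i < n) v i ord0 ^+ 2.
Proof. by rewrite mxE; apply: eq_bigr => i _; rewrite mxE expr2. Qed.

End Norm2.

Local Close Scope classical_set_scope.

Theorem proposition2 (R : realType) (n : nat) (A : 'cV[R]_n -> 'M[R]_n)
    (sigma : R) :
  (forall v, (A v)^T = A v) ->
  Ck_on 3 A (fun v => v != 0) ->
  (forall (alpha : R) v, alpha != 0 -> A (alpha *: v) = A v) ->
  (* (a) *)
  (forall (lam : R) (vs : 'cV[R]_n),
      A vs *m vs = lam *: vs -> norm2 vs = 1 -> sigma != lam ->
      Jmat A vs - sigma%:M \in unitmx ->
      (sigma < lam -> phi A sigma vs = vs) /\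
      (lam < sigma -> phi A sigma vs = - vs))
  /\
  (* (b) *)
  (forall vs : 'cV[R]_n,
      vs != 0 -> Jmat A vs - sigma%:M \in unitmx ->
      (phi A sigma vs = vs ->
         let lam := sigma + (norm2 (invmx (Jmat A vs - sigma%:M) *m vs))^-1 in
         A vs *m vs = lam *: vs /\ lam = (vs^T *m A vs *m vs) ord0 ord0) /\
      (phi A sigma vs = - vs ->
         let lam := sigma - (norm2 (invmx (Jmat A vs - sigma%:M) *m vs))^-1 in
         A vs *m vs = lam *: vs /\ lam = (vs^T *m A vs *m vs) ord0 ord0)).
Proof.
move=> _ Ck hom.
have JV := @Jv R n A Ck hom.
split.
  move=> lam vs Hev nv1 slam U.
  have v0 : vs != 0.
    apply/eqP => v0; move: nv1; rewrite v0.
    have -> : norm2 (0 : 'cV[R]_n) = 0.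
      by rewrite -(scale0r (0 : 'cV[R]_n)) norm2Z normr0 mul0r.
    by move/eqP; rewrite eq_sym oner_eq0.
  set M := Jmat A vs - sigma%:M.
  have ls0 : lam - sigma != 0 by rewrite subr_eq0 eq_sym.
  have Mv : M *m vs = (lam - sigma) *: vs.
    by rewrite mulmxBl JV // Hev mul_scalar_mx scalerBl.
  have ps : psi A sigma vs = (lam - sigma)^-1 *: vs.
    rewrite /psi -/M -[X in _ = _ *: X](mulKmx U vs) Mv scalemxAr scalerA.
    by rewrite mulVf ?scale1r.
  rewrite /phi ps norm2Z nv1 mulr1 scalerA.
  split => H.
    rewrite ger0_norm ?invr_ge0 ?subr_ge0 ?ltW // mulVf ?scale1r //.
    by rewrite invr_eq0.
  rewrite ltr0_norm ?invr_lt0 ?subr_lt0 // invrN mulNr mulVf ?scaleN1r //.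
  by rewrite invr_eq0.
move=> vs v0 U.
set M := Jmat A vs - sigma%:M.
set p := invmx M *m vs.
have pn0 : p != 0.
  apply/eqP => p0; move: v0; rewrite -(mulKVmx U vs) -/p p0 mulmx0 eqxx.
  done.
have Np : 0 < norm2 p.
  rewrite lt_def norm2_ge0 andbT; apply/eqP => N0.
  by move: pn0; rewrite (@norm2_eq0 _ _ p N0) eqxx.
have core : forall e : R, `|e| = 1 -> phi A sigma vs = e *: vs ->
    A vs *m vs = (sigma + e * (norm2 p)^-1) *: vs /\
    sigma + e * (norm2 p)^-1 = (vs^T *m A vs *m vs) ord0 ord0.
  move=> e e1 Hphi.
  have ee : e * e = 1 by rewrite -expr2 -real_normK ?e1 ?expr1n // num_real.
  have e0 : e != 0 by apply/eqP => e0; move: e1; rewrite e0 normr0 => /eqP; rewrite eq_sym oner_eq0.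
  have N0 : norm2 p != 0 by rewrite gt_eqF.
  have pe : p = (norm2 p * e) *: vs.
    have H' : (norm2 p)^-1 *: p = e *: vs by move: Hphi; rewrite /phi /psi -/M -/p.
    by rewrite -scalerA -H' scalerA mulfV // scale1r.
  have Mv : M *m vs = (e * (norm2 p)^-1) *: vs.
    have : vs = (norm2 p * e) *: (M *m vs).
      by rewrite scalemxAr -pe /p mulKVmx.
    move=> E; rewrite [in RHS]E scalerA.
    have -> : e * (norm2 p)^-1 * (norm2 p * e) = 1.
      by rewrite -[RHS]ee; field.
    by rewrite scale1r.
  have HA : A vs *m vs = (sigma + e * (norm2 p)^-1) *: vs.
    rewrite -JV // (_ : Jmat A vs = M + sigma%:M); last by rewrite /M subrK.
    by rewrite mulmxDl Mv mul_scalar_mx scalerDl addrC.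
  split => //.
  have nv : norm2 vs = 1.
    have : norm2 (phi A sigma vs) = 1.
      rewrite /phi /psi -/M -/p norm2Z ger0_norm ?invr_ge0 ?norm2_ge0 //.
      by rewrite mulVf.
    by rewrite Hphi norm2Z e1 mul1r.
  rewrite -mulmxA HA -scalemxAr mxE vTv -norm2_sq nv expr1n mulr1.
  done.
split => Hphi lam.
  have := core 1 (normr1 _); rewrite scale1r mul1r => /(_ Hphi).
  by rewrite /lam.
have n1 : `|-1 : R| = 1 by rewrite normrN normr1.
have := core (-1) n1; rewrite scaleN1r mulN1r => /(_ Hphi).
by rewrite /lam.
Qed.
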